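(* Let $G$ be a group with generating set $S$ not containing the identity. Then every color-permuting automorphism of the Cayley color digraph of $G$ with respect to $S$ is an isometry of $G$ with respect to the cardinal metric $d_C$.
   Context: The cardinal norm is $\|x\| = \min\{|A| : A\subseteq S,\ x\in\langle A\rangle\}$, where $\langle A\rangle$ is the subgroup generated by $A$, and $d_C(g,h)=\|g^{-1}h\|$. The Cayley color digraph has vertex set $G$ and, for each $x\in G$ and $c\in S$, an arc $(x,xc)$ of color $c$. A color-permuting automorphism is a digraph automorphism $\alpha$ (bijection of $G$ with $(x,y)$ an arc iff $(\alpha(x),\alpha(y))$ is an arc) for which there is a permutation $\sigma$ of $S$ such that, for all $x,y\in G$, $(x,y)$ has color $c$ iff $(\alpha(x),\alpha(y))$ has color $\sigma(c)$. *)

(* Defs.v *)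
From Stdlib Require Import List Arith.
Import ListNotations.

Section Defs.
Variables (T : Type) (mul : T -> T -> T) (inv : T -> T) (e : T).

Definition is_group : Prop :=
  (forall x y z, mul x (mul y z) = mul (mul x y) z) /\
  (forall x, mul e x = x) /\ (forall x, mul x e = x) /\
  (forall x, mul (inv x) x = e) /\ (forall x, mul x (inv x) = e).

Inductive gen (A : T -> Prop) : T -> Prop :=
  | gen_base : forall a, A a -> gen A a
  | gen_one : gen A e
  | gen_mul : forall x y, gen A x -> gen A y -> gen A (mul x y)
  | gen_inv : forall x, gen A x -> gen A (inv x).

Variable S : T -> Prop.

Definition generates : Prop := forall x, gen S x.

(* a finite subset A of S, given as a duplicate-free list, with x in <A> *)
Definition fin_sub_gen (l : list T) (x : T) : Prop :=
  NoDup l /\ Forall S l /\ gen (fun a => In a l) x.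

(* cardinal norm: ||x|| = n iff n = min{|A| : A subset S, x in <A>}.
   (Infinite A never realize the minimum, since x lies in the subgroup
   generated by a finite subset of S.) *)
Definition cnorm_is (x : T) (n : nat) : Prop :=
  (exists l, fin_sub_gen l x /\ length l = n) /\
  (forall l, fin_sub_gen l x -> n <= length l).

Definition dC_is (g h : T) (n : nat) : Prop := cnorm_is (mul (inv g) h) n.

Definition has_color (x y c : T) : Prop := S c /\ y = mul x c.
Definition arc (x y : T) : Prop := exists c, has_color x y c.

Definition bijective_map (f : T -> T) : Prop :=
  exists g, (forall x, g (f x) = x) /\ (forall y, f (g y) = y).

Definition perm_of_S (sigma : T -> T) : Prop :=
  (forall c, S c -> S (sigma c)) /\
  (forall c1 c2, S c1 -> S c2 -> sigma c1 = sigma c2 -> c1 = c2) /\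
  (forall d, S d -> exists c, S c /\ sigma c = d).

Definition color_permuting_aut (alpha : T -> T) : Prop :=
  bijective_map alpha /\
  (forall x y, arc x y <-> arc (alpha x) (alpha y)) /\
  exists sigma, perm_of_S sigma /\
    forall x y c, S c ->
      (has_color x y c <-> has_color (alpha x) (alpha y) (sigma c)).

Definition dC_isometry (alpha : T -> T) : Prop :=
  forall g h n, dC_is g h n <-> dC_is (alpha g) (alpha h) n.

End Defs.

(* Main.v *)
Require Import Defs.
From Stdlib Require Import List Arith Lia Classical.
Import ListNotations.

Section Aux.
Variables (T : Type) (mul : T -> T -> T) (inv : T -> T) (e : T).
Hypothesis G : is_group T mul inv e.
Variable S : T -> Prop.
Variable f : T -> T.
Hypothesis U : forall d, S d -> exists c, S c /\ forall x, f (mul x d) = mul (f x) c.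

Lemma aux1 : forall l, Forall S l -> exists l', Forall S l' /\ length l' = length l /\
  forall d, In d l -> exists c, In c l' /\ forall x, f (mul x d) = mul (f x) c.
Proof.
  induction l as [|a l IH]; intros Hl.
  - exists []. simpl. repeat split; auto. intros d [].
  - inversion Hl; subst. destruct (IH H2) as [l' [Q1 [H3 H4]]].
    destruct (U a H1) as [c [Hc Hcx]].
    exists (c :: l'). split; [constructor; auto|]. split; [simpl; lia|].
    intros d [<-|Hd].
    + exists c; split; [left; auto|auto].
    + destruct (H4 d Hd) as [c' [? ?]]. exists c'; split; [right|]; auto.
Qed.

Lemma aux2 : forall l l', (forall d, In d l -> exists c, In c l' /\ forall x, f (mul x d) = mul (f x) c) ->
  forall w, gen T mul inv e (fun a => In a l) w -> forall g, exists w',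
    gen T mul inv e (fun a => In a l') w' /\ f (mul g w) = mul (f g) w'.
Proof.
  destruct G as [Ha [Hl [Hr [Hil Hir]]]].
  intros l l' H w Hw. induction Hw as [a Ha'| |x y _ IHx _ IHy|x _ IHx]; intros g.
  - destruct (H a Ha') as [c [? ?]]. exists c; split; [apply gen_base|]; auto.
  - exists e. split; [apply gen_one|]. rewrite !Hr; auto.
  - destruct (IHx g) as [x' [? Hx']]. destruct (IHy (mul g x)) as [y' [? Hy']].
    exists (mul x' y'). split; [apply gen_mul; auto|].
    rewrite Ha, Hy', Hx', Ha. auto.
  - destruct (IHx (mul g (inv x))) as [x' [? Hx']].
    exists (inv x'). split; [apply gen_inv; auto|].
    rewrite <- Ha, Hil, Hr in Hx'. rewrite Hx', <- Ha, Hir, Hr. auto.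
Qed.
End Aux.

Lemma gen_mono T mul inv e (A B : T -> Prop) : (forall a, A a -> B a) ->
  forall w, gen T mul inv e A w -> gen T mul inv e B w.
Proof. intros H w Hw; induction Hw. - apply gen_base; auto. - apply gen_one. - apply gen_mul; auto. - apply gen_inv; auto. Qed.

Lemma dedup {T} : forall l : list T, exists l', NoDup l' /\ (forall a, In a l <-> In a l') /\ length l' <= length l.
Proof.
  induction l as [|a l IH].
  - exists []. split; [constructor|]. split; [tauto|auto].
  - destruct IH as [l' [H1 [H2 H3]]]. destruct (classic (In a l')) as [Hi|Hn].
    + exists l'. split; auto. split; [|simpl; lia].
      intros b; split.
      * intros [<-|?]; auto; apply H2; auto.
      * intros; right; apply H2; auto.
    + exists (a :: l'). split; [constructor; auto|]. split; [|simpl; lia].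
      intros b; split.
      * intros [<-|?]; [left|right]; auto; apply H2; auto.
      * intros [<-|?]; [left|right]; auto; apply H2; auto.
Qed.

Lemma contract T mul inv e S f : is_group T mul inv e ->
  (forall d, S d -> exists c, S c /\ forall x, f (mul x d) = mul (f x) c) ->
  forall g h l, fin_sub_gen T mul inv e S l (mul (inv g) h) ->
  exists l'', fin_sub_gen T mul inv e S l'' (mul (inv (f g)) (f h)) /\ length l'' <= length l.
Proof.
  intros G U g h l [Hnd [HS Hg]].
  destruct (aux1 T mul S f U l HS) as [l' [HS' [Hlen Hd]]].
  destruct (@aux2 T mul inv e G f l l' Hd _ Hg g) as [w' [Hw' Heq]].
  destruct G as [Ha [Hl [Hr [Hil Hir]]]].
  rewrite Ha, Hir, Hl in Heq.
  destruct (dedup l') as [l'' [N [I L]]].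
  exists l''. split; [|lia]. split; [auto|split].
  - rewrite Forall_forall in *. intros x Hx; apply HS', I; auto.
  - rewrite Heq, Ha, Hil, Hl. eapply gen_mono; [|exact Hw']. intros a Ha'; apply I; auto.
Qed.

Lemma transfer T mul inv e S f f' : is_group T mul inv e ->
  (forall d, S d -> exists c, S c /\ forall x, f (mul x d) = mul (f x) c) ->
  (forall d, S d -> exists c, S c /\ forall x, f' (mul x d) = mul (f' x) c) ->
  (forall x, f' (f x) = x) ->
  forall g h n, dC_is T mul inv e S g h n -> dC_is T mul inv e S (f g) (f h) n.
Proof.
  intros G U U' K g h n [[l [Hl Hn]] Hmin].
  destruct (contract T mul inv e S f G U g h l Hl) as [l'' [H1 H2]].
  split.
  - exists l''. split; auto.
    destruct (contract T mul inv e S f' G U' _ _ l'' H1) as [l3 [H3 H4]].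
    rewrite !K in H3. specialize (Hmin l3 H3). lia.
  - intros l0 H0. destruct (contract T mul inv e S f' G U' _ _ l0 H0) as [l3 [H3 H4]].
    rewrite !K in H3. specialize (Hmin l3 H3). lia.
Qed.

Theorem mainTheorem11 (T : Type) (mul : T -> T -> T) (inv : T -> T) (e : T)
  (S : T -> Prop) (alpha : T -> T) :
  is_group T mul inv e ->
  generates T mul inv e S ->
  ~ S e ->
  color_permuting_aut T mul S alpha ->
  dC_isometry T mul inv e S alpha.
Proof.
  intros G _ _ [[beta [K1 K2]] [_ [sigma [[P1 [P2 P3]] Hc]]]].
  assert (Ua : forall d, S d -> exists c, S c /\ forall x, alpha (mul x d) = mul (alpha x) c).
  { intros d Hd. exists (sigma d). split; auto. intros x.
    destruct (proj1 (Hc x (mul x d) d Hd) (conj Hd eq_refl)) as [_ H]. exact H. }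
  assert (Ub : forall d, S d -> exists c, S c /\ forall x, beta (mul x d) = mul (beta x) c).
  { intros d Hd. destruct (P3 d Hd) as [c [Hc' <-]]. exists c. split; auto. intros x.
    destruct (proj1 (Hc (beta x) (mul (beta x) c) c Hc') (conj Hc' eq_refl)) as [_ H].
    rewrite K2 in H. rewrite <- H, K1. reflexivity. }
  intros g h n. split.
  - apply (transfer T mul inv e S alpha beta G Ua Ub K1).
  - intros H. pose proof (transfer T mul inv e S beta alpha G Ub Ua K2 _ _ n H) as H'.
    rewrite !K1 in H'. exact H'.
Qed.
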